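(* Let $p\ne17$ be an odd prime. Then $$\Big(\frac2p\Big)\sum_{k=0}^{[p/4]}\binom{4k}{2k}\frac1{272^k}\equiv\begin{cases}1\pmod p&\text{if }p\equiv\pm1,\pm4\pmod{17},\\-1\pmod p&\text{if }p\equiv\pm2,\pm8\pmod{17},\\ \frac14\pmod p&\text{if }p\equiv\pm6,\pm7\pmod{17},\\-\frac14\pmod p&\text{if }p\equiv\pm3,\pm5\pmod{17}.\end{cases}$$
   Context: $[x]$ is the greatest integer $\le x$; $(\frac2p)$ is the Legendre symbol. *)

(* Defs.v *)
From HB Require Import structures.
From mathcomp Require Import all_boot all_order all_algebra.
Set Implicit Arguments. Unset Strict Implicit. Unset Printing Implicit Defensive.
Import GRing.Theory.

Definition legendre (a p : nat) : int :=
  if (p %| a)%N then 0%R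
  else if [exists x : 'I_p, ((x * x) %% p == a %% p)%N] then 1%R
  else (-1)%R.

(* Main.v *)
Require Import Defs.
From HB Require Import structures.
From mathcomp Require Import all_boot all_order all_algebra.
From mathcomp Require Import finfield ring zify.
Import GRing.Theory.
Local Open Scope ring_scope.

Lemma binN1 m : (m.+1 * 'C((m.+1).*2, m.+1) = 2 * (m.*2).+1 * 'C(m.*2, m))%N.
Proof.
have e1 := mul_bin_diag ((m.+1).*2) m.
have e2 := mul_bin_down ((m.*2).+1) m.
rewrite /= in e1 e2.
move: e1 e2.
set A := 'C(_, m.+1). set B := 'C(_, m). set C := 'C(_, m).
move=> e1 e2. nia.
Qed.

Section Fp.
Variable p : nat.
Hypothesis hp : prime p.
Hypothesis hodd : odd p.
Local Notation F := 'F_p.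
Local Notation n := p./2.

Lemma pE : (n.*2).+1 = p.
Proof. by have := odd_double_half p; rewrite hodd add1n. Qed.

Lemma natF0 k : (k%:R == 0 :> F) = (p %| k)%N.
Proof. by rewrite (dvdn_pcharf (pchar_Fp hp)). Qed.

Lemma binF m : (m <= n)%N -> ('C(m.*2, m))%:R = (-4)^+m * ('C(n, m))%:R :> F.
Proof.
elim: m => [|m IH] hm; first by rewrite !bin0 expr0 mul1r.
have hm' : (m <= n)%N by apply: ltnW.
have IH' := IH hm'.
have nz : (m.+1)%:R != 0 :> F.
  rewrite natF0; apply/negP => /dvdn_leq => /(_ isT).
  have := pE; lia.
apply: (mulfI nz).
rewrite -natrM binN1 mulrCA -natrM mul_bin_left.
rewrite !natrM IH' natrB // exprS.
have p0 : (n.*2).+1%:R = 0 :> F by rewrite pE pchar_Fp_0.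
have dbl k : ((k.*2).+1%:R : F) = 2 * k%:R + 1.
  have -> : (k.*2).+1 = (k + k + 1)%N by rewrite addnn addn1.
  by rewrite !natrD; ring.
rewrite dbl in p0; rewrite dbl.
apply/eqP; rewrite -subr_eq0; apply/eqP.
transitivity ((-4)^+m * 'C(n, m)%:R * (2 * (2 * n%:R + 1)) : F); first ring.
by rewrite p0 !mulr0.
Qed.


Lemma fermat (x : F) : x != 0 -> x ^+ (n.*2) = 1.
Proof.
move=> nz; apply: (mulIf nz); rewrite mul1r -exprSr pE.
by have := expf_card x; rewrite card_Fp.
Qed.

Lemma natF_inj k l : (k < p)%N -> (l < p)%N -> k%:R = l%:R :> F -> k = l.
Proof.
move=> hk hl e; by rewrite -(modn_small hk) -(modn_small hl) -!(val_Fp_nat hp) e.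
Qed.

Lemma p_gt2 : (2 < p)%N.
Proof.
have := prime_gt1 hp; case: p hodd => [|[|[|]]] //.
Qed.

Lemma two_nz : (2 : F) != 0.
Proof. by rewrite natF0 gtnNdvd //; apply: p_gt2. Qed.

Lemma euler2 : ((legendre 2 p)%:~R : F) = 2 ^+ n.
Proof.
have p2 : (p %| 2)%N = false.
  by rewrite gtnNdvd //; apply: p_gt2.
rewrite /legendre p2.
case: ifP => [/existsP [x /eqP hx] | hnx].
  have e : (x%:R : F) ^+ 2 = 2.
    have : ((x*x)%%p)%:R = (2 %% p)%:R :> F by rewrite hx.
    by rewrite !Fp_nat_mod // natrM expr2.
  have xnz : (x%:R : F) != 0.
    by apply/negP => /eqP x0; move: e; rewrite x0 expr0n /= => /eqP; rewrite eq_sym (negPf two_nz).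
  by rewrite -e -exprM mul2n fermat.
have a2 : (2 ^+ n : F) ^+ 2 = 1 by rewrite -exprM mulnC mul2n fermat // two_nz.
have : ((2 ^+ n : F) - 1) * (2 ^+ n + 1) = 0 by rewrite -subr_sqr a2 expr1n subrr.
move/eqP; rewrite mulf_eq0 => /orP [/eqP a1|]; last first.
  by rewrite addr_eq0 => /eqP ->.
exfalso.
pose s := (2 : F) :: [seq (i.+1%:R : F) ^+ 2 | i <- iota 0 n].
have n0 : (0 < n)%N by have := p_gt2; have := pE; lia.
have Hs : size s = n.+1 by rewrite /= size_map size_iota.
have := @max_poly_roots _ ('X^n - 1) s.
rewrite -(polyC1) size_XnsubC // Hs ltnn => H; suff: false by []; apply: H.
- by rewrite -size_poly_gt0 size_XnsubC.
- apply/allP => y /=; rewrite inE => /orP [/eqP ->|/mapP [i hi ->]];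
    rewrite rootE !hornerE ?a1 ?subrr //.
  rewrite -exprM mul2n fermat ?subrr //.
  rewrite natF0 gtnNdvd //; move: hi; rewrite mem_iota; have := pE; lia.
- rewrite /s /= map_inj_in_uniq ?iota_uniq ?andbT.
    apply/mapP => [[i hi he]].
    have hi' : (i.+1 < p)%N by move: hi; rewrite mem_iota; have := pE; lia.
    move/negbT: hnx => /existsPn /(_ (Ordinal hi')) /negP; apply => /=.
    apply/eqP; have := congr1 (@nat_of_ord _) he; rewrite expr2 -natrM !(val_Fp_nat hp) => ->.
    by [].  
  move=> i j; rewrite !mem_iota => hi hj /eqP.
  rewrite -subr_eq0 subr_sqr mulf_eq0 => /orP [|].
    by rewrite subr_eq0 => /eqP /natF_inj; have := pE; lia.
  rewrite -natrD natF0 gtnNdvd //; have := pE; lia.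
Qed.
End Fp.


Section Gen.
Variable R : comNzRingType.

Lemma sum_pairs (g : nat -> R) j :
  \sum_(i < j.*2) g i = \sum_(k < j) (g (k.*2) + g (k.*2).+1).
Proof.
elim: j => [|j IH]; first by rewrite !big_ord0.
by rewrite doubleS !big_ord_recr /= IH addrA.
Qed.

Lemma sum_widen (g : nat -> R) m N : (m < N)%N -> (forall i, (m < i)%N -> g i = 0) ->
  \sum_(i < m.+1) g i = \sum_(i < N) g i.
Proof.
move=> hN hg.
rewrite -!(big_mkord xpredT) (@big_cat_nat _ _ _ m.+1 0 N _ _ (leq0n _) hN) /=.
have -> : \sum_(m.+1 <= i < N) g i = 0.
  by rewrite big_nat_cond; apply: big1 => i /andP [/andP [hi _] _]; exact: hg.
by rewrite addr0.
Qed.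

Lemma binsum (u : R) m : (1 + u) ^+ m + (1 - u) ^+ m =
  2 * \sum_(k < m./2.+1) ('C(m, k.*2))%:R * (u ^+ 2) ^+ k.
Proof.
rewrite ![(1 + _)]addrC !exprD1n -big_split /=.
pose g i := u ^+ i *+ 'C(m, i) + (- u) ^+ i *+ 'C(m, i).
rewrite (@sum_widen g m ((m./2.+1).*2)); last first.
- by move=> i hi; rewrite /g bin_small // !mulr0n addr0.
- have := odd_double_half m; rewrite doubleS; case: (odd m) => /=; lia.
rewrite sum_pairs mulr_sumr; apply: eq_bigr => k _.
have e1 : (-1 : R) ^+ (k.*2) = 1 by rewrite -mul2n exprM sqrrN !expr1n.
have e2 : (-1 : R) ^+ (k.*2).+1 = -1 by rewrite exprS e1 mulr1.
rewrite /g !(exprNn u) e1 e2 -exprM mul2n.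
rewrite mulr_natl.
set A := u ^+ k.*2. set B := u ^+ (k.*2).+1.
set C1 := 'C(m, k.*2). set C2 := 'C(m, (k.*2).+1).
ring.
Qed.
End Gen.


Definition Phi {R : comNzRingType} (z : R) := 1 + z + z^+2 + z^+3 + z^+4 + z^+5 + z^+6 + z^+7 + z^+8 + z^+9 + z^+10 + z^+11 + z^+12 + z^+13 + z^+14 + z^+15 + z^+16.
Definition hh {R : comNzRingType} (z : R) := z + z^+13 + z^+16 + z^+4 - (z^+9 + z^+15 + z^+8 + z^+2).
Definition hp {R : comNzRingType} (z : R) := z^+3 + z^+5 + z^+14 + z^+12 - (z^+10 + z^+11 + z^+7 + z^+6).

Section Poly17.
Variable R : comNzRingType.
Variable z : R.
Hypothesis hz : Phi z = 0.

Lemma z17 : z ^+ 17 = 1.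
Proof.
apply/eqP; rewrite -subr_eq0; apply/eqP.
transitivity ((z - 1) * Phi z); first by rewrite /Phi; ring.
by rewrite hz mulr0.
Qed.

Lemma zmod m : z^+m = z^+(m %% 17).
Proof. by rewrite expr_mod // z17. Qed.

Lemma idA : hh z ^+ 2 + hp z ^+ 2 = 17%:R.
Proof.
apply/eqP; rewrite -subr_eq0; apply/eqP.
transitivity ((-(17)%:R * z^+0 + (17)%:R * z^+1 + (1)%:R * z^+2 + -(3)%:R * z^+3 + (3)%:R * z^+4 + (1)%:R * z^+5 + -(3)%:R * z^+6 + (1)%:R * z^+7 + (3)%:R * z^+8 + -(7)%:R * z^+9 + (3)%:R * z^+10 + (1)%:R * z^+11 + -(3)%:R * z^+12 + (1)%:R * z^+13 + (3)%:R * z^+14 + -(3)%:R * z^+15 + (1)%:R * z^+16) * Phi z).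
  by rewrite /hh /hp /Phi; ring.
by rewrite hz mulr0.
Qed.

Lemma idB : hh z * hp z = 2 * (hp z ^+ 2 - hh z ^+ 2).
Proof.
apply/eqP; rewrite -subr_eq0; apply/eqP.
transitivity (((2)%:R * z^+2 + -(6)%:R * z^+3 + (7)%:R * z^+4 + -(8)%:R * z^+6 + (4)%:R * z^+7 + -(1)%:R * z^+8 + (4)%:R * z^+9 + -(1)%:R * z^+10 + (4)%:R * z^+11 + -(8)%:R * z^+12 + (7)%:R * z^+14 + -(6)%:R * z^+15 + (2)%:R * z^+16) * Phi z).
  by rewrite /hh /hp /Phi; ring.
by rewrite hz mulr0.
Qed.

Lemma classQ r : r \in [:: 1; 16; 4; 13]%N -> hh (z^+r) = hh z /\ hp (z^+r) = hp z.
Proof.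
by rewrite !inE => /or4P [] /eqP ->; split; rewrite /hh /hp -!exprM !(zmod (_ * _)) /=; ring.
Qed.
Lemma class9 r : r \in [:: 2; 15; 8; 9]%N -> hh (z^+r) = - hh z /\ hp (z^+r) = - hp z.
Proof.
by rewrite !inE => /or4P [] /eqP ->; split; rewrite /hh /hp -!exprM !(zmod (_ * _)) /=; ring.
Qed.
Lemma class3 r : r \in [:: 3; 14; 5; 12]%N -> hh (z^+r) = hp z /\ hp (z^+r) = - hh z.
Proof.
by rewrite !inE => /or4P [] /eqP ->; split; rewrite /hh /hp -!exprM !(zmod (_ * _)) /=; ring.
Qed.
Lemma class10 r : r \in [:: 6; 11; 7; 10]%N -> hh (z^+r) = - hp z /\ hp (z^+r) = hh z.
Proof.
by rewrite !inE => /or4P [] /eqP ->; split; rewrite /hh /hp -!exprM !(zmod (_ * _)) /=; ring.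
Qed.
End Poly17.


Lemma cancelR {R : comNzRingType} {a b x y : R} : b * a = 1 -> a * x = a * y -> x = y.
Proof. by move=> ba e; rewrite -[x]mul1r -ba -mulrA e mulrA ba mul1r. Qed.

Section Ring.
Variable p : nat.
Hypothesis hpr : prime p.
Hypothesis hodd : odd p.
Hypothesis h17 : p != 17%N.
Variable R : comNzRingType.
Variable c : {rmorphism 'F_p -> R}.
Hypothesis cinj : injective c.
Hypothesis charR : p \in [pchar R].
Variable z : R.
Hypothesis hz : Phi z = 0.
Local Notation n := p./2.
Local Notation F := 'F_p.

Let h := hh z.
Let h' := hp z.
Let g := h' ^+ 2 - h ^+ 2.
Let k17 := c 17^-1.
Let k2 := c 2^-1.

Lemma nz17 : (17%:R : F) != 0.
Proof. by rewrite natF0 // dvdn_prime2. Qed.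

Lemma k17E : k17 * 17%:R = 1.
Proof. by rewrite /k17 -(rmorph_nat c) -rmorphM mulVf ?rmorph1 // nz17. Qed.

Lemma k2E : k2 * 2 = 1.
Proof. by rewrite /k2 -(rmorph_nat c) -rmorphM mulVf ?rmorph1 // two_nz. Qed.

Lemma gsq : g ^+ 2 = 17%:R.
Proof.
have e : (h ^+ 2 + h' ^+ 2) ^+ 2 = g ^+ 2 + 4 * (h * h') ^+ 2 by rewrite /g; ring.
rewrite idA // idB // -/h -/h' -/g in e.
have e2 : 17%:R * g ^+ 2 = 17%:R * 17%:R :> R.
  by rewrite -expr2 e; ring.
by rewrite -[g ^+ 2]mul1r -k17E -mulrA e2 mulrA k17E mul1r.
Qed.

Local Notation fr := (pFrobenius_aut charR).

Lemma frz : fr z = z ^+ (p %% 17).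
Proof. by rewrite pFrobenius_autE expr_mod // z17. Qed.

Lemma frh : fr h = hh (z ^+ (p %% 17)).
Proof. rewrite /h /hh rmorphB !rmorphD !rmorphXn. by rewrite -[X in X z]/(pFrobenius_aut charR) frz. Qed.

Lemma frh' : fr h' = hp (z ^+ (p %% 17)).
Proof. by rewrite /h' /hp rmorphB !rmorphD !rmorphXn -[X in X z]/(pFrobenius_aut charR) frz. Qed.

Lemma frg : fr g = fr h' ^+ 2 - fr h ^+ 2.
Proof. by rewrite /g rmorphB !rmorphXn. Qed.

Lemma powE x : x * x ^+ (n.*2) = fr x.
Proof. by rewrite pFrobenius_autE -exprS pE. Qed.

Definition T : F := \sum_(k < n./2.+1) ('C(n, k.*2))%:R * (17^-1) ^+ k.

Lemma Tid : c (2 * T * 17 ^+ n) = c (2 ^+ n) * (h ^+ (n.*2) + h' ^+ (n.*2)).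
Proof.
pose u := k17 * g.
have u2 : u ^+ 2 = k17 by rewrite exprMn gsq expr2 -mulrA k17E mulr1.
have cT : c T = \sum_(k < n./2.+1) ('C(n, k.*2))%:R * (u ^+ 2) ^+ k.
  by rewrite rmorph_sum; apply: eq_bigr => k _; rewrite rmorphM rmorph_nat rmorphXn u2.
have e1 : 1 + u = 2 * k17 * h' ^+ 2.
  by rewrite -[1 in LHS]k17E -(@idA _ _ hz) -/h -/h' /u /g; ring.
have e2 : 1 - u = 2 * k17 * h ^+ 2.
  by rewrite -[1 in LHS]k17E -(@idA _ _ hz) -/h -/h' /u /g; ring.
have kk : k17 ^+ n * 17%:R ^+ n = 1 by rewrite -exprMn k17E expr1n.
rewrite !rmorphM !rmorphXn !rmorph_nat cT.
rewrite -(binsum _ u n) e1 e2 !exprMn -addnn !exprD.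
transitivity (2 ^+ n * (h ^+ n * h ^+ n + h' ^+ n * h' ^+ n) * (k17 ^+ n * 17%:R ^+ n)); first ring.
by rewrite kk mulr1.
Qed.

Lemma c17n : c (17 ^+ n) = g ^+ (n.*2).
Proof. by rewrite rmorphXn rmorph_nat -gsq -exprM mul2n. Qed.

Lemma hinv : (h' * g * k2 * k17) * h = 1.
Proof.
transitivity ((h * h') * g * k2 * k17); first ring.
rewrite idB // -/h -/h' -/g.
transitivity ((k2 * 2) * (k17 * g ^+ 2)); first ring.
by rewrite gsq k2E k17E mul1r.
Qed.

Lemma h'inv : (h * g * k2 * k17) * h' = 1.
Proof.
transitivity ((h * h') * g * k2 * k17); first ring.
rewrite idB // -/h -/h' -/g.
transitivity ((k2 * 2) * (k17 * g ^+ 2)); first ring.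
by rewrite gsq k2E k17E mul1r.
Qed.

Lemma ginv : (g * k17) * g = 1.
Proof. transitivity (k17 * g ^+ 2); first ring. by rewrite gsq k17E. Qed.

Lemma mainQ : (p %% 17)%N \in [:: 1; 16; 4; 13]%N ->
  (17 ^+ n = 1 :> F) /\ 2 * T * 17 ^+ n = 2 ^+ n * 2.
Proof.
move=> /(@classQ _ _ hz _) [e1 e2].
have Hh : h ^+ n.*2 = 1 by apply: (cancelR hinv); rewrite powE frh e1 mulr1.
have Hh' : h' ^+ n.*2 = 1 by apply: (cancelR h'inv); rewrite powE frh' e2 mulr1.
have Hg : g ^+ n.*2 = 1.
  by apply: (cancelR ginv); rewrite powE frg frh frh' e1 e2 mulr1.
split; apply: cinj; first by rewrite c17n Hg rmorph1.
by rewrite Tid Hh Hh' rmorphM rmorph_nat.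
Qed.

Lemma main9 : (p %% 17)%N \in [:: 2; 15; 8; 9]%N ->
  (17 ^+ n = 1 :> F) /\ 2 * T * 17 ^+ n = 2 ^+ n * (- 2).
Proof.
move=> /(@class9 _ _ hz _) [e1 e2].
have Hh : h ^+ n.*2 = -1 by apply: (cancelR hinv); rewrite powE frh e1 mulrN1.
have Hh' : h' ^+ n.*2 = -1 by apply: (cancelR h'inv); rewrite powE frh' e2 mulrN1.
have Hg : g ^+ n.*2 = 1.
  by apply: (cancelR ginv); rewrite powE frg frh frh' e1 e2 !sqrrN mulr1.
split; apply: cinj; first by rewrite c17n Hg rmorph1.
rewrite Tid Hh Hh' rmorphM rmorphN rmorph_nat; ring.
Qed.

Lemma main3 : (p %% 17)%N \in [:: 3; 14; 5; 12]%N ->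
  (17 ^+ n = -1 :> F) /\ 2 * T * 17 ^+ n = 2 ^+ n * 2^-1.
Proof.
move=> /(@class3 _ _ hz _) [e1 e2].
have Hg : g ^+ n.*2 = -1.
  apply: (cancelR ginv); rewrite powE frg frh frh' e1 e2 sqrrN -/h -/h' /g; ring.
have HX : g * (2 * (h ^+ n.*2 + h' ^+ n.*2)) = g * 1.
  transitivity ((h * h') * (h ^+ n.*2 + h' ^+ n.*2)); first by rewrite idB // -/h -/h' -/g; ring.
  transitivity (h' * (h * h ^+ n.*2) + h * (h' * h' ^+ n.*2)); first ring.
  rewrite !powE frh frh' e1 e2 -/h -/h' /g; ring.
have HX2 := cancelR ginv HX.
have HX3 : h ^+ n.*2 + h' ^+ n.*2 = k2.
  by rewrite -[LHS]mul1r -k2E -mulrA HX2 mulr1.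
split; apply: cinj; first by rewrite c17n Hg rmorphN rmorph1.
by rewrite Tid HX3 rmorphM.
Qed.

Lemma main10 : (p %% 17)%N \in [:: 6; 11; 7; 10]%N ->
  (17 ^+ n = -1 :> F) /\ 2 * T * 17 ^+ n = 2 ^+ n * - 2^-1.
Proof.
move=> /(@class10 _ _ hz _) [e1 e2].
have Hg : g ^+ n.*2 = -1.
  apply: (cancelR ginv); rewrite powE frg frh frh' e1 e2 sqrrN -/h -/h' /g; ring.
have HX : g * (2 * (h ^+ n.*2 + h' ^+ n.*2)) = g * (-1).
  transitivity ((h * h') * (h ^+ n.*2 + h' ^+ n.*2)); first by rewrite idB // -/h -/h' -/g; ring.
  transitivity (h' * (h * h ^+ n.*2) + h * (h' * h' ^+ n.*2)); first ring.
  rewrite !powE frh frh' e1 e2 -/h -/h' /g; ring.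
have HX2 := cancelR ginv HX.
have HX3 : h ^+ n.*2 + h' ^+ n.*2 = - k2.
  by rewrite -[LHS]mul1r -k2E -mulrA HX2; ring.
split; apply: cinj; first by rewrite c17n Hg rmorphN rmorph1.
by rewrite Tid HX3 rmorphM rmorphN.
Qed.
End Ring.


Section Inst.
Variable p : nat.
Hypothesis hp : prime p.
Local Notation F := 'F_p.
Definition Phi0 : {poly F} := \poly_(i < 17) 1.
Local Notation RR := {poly %/ Phi0}.

Lemma Phi0_size : size Phi0 = 17%N.
Proof. by rewrite size_poly_eq // oner_neq0. Qed.

Lemma Phi0_monic : Phi0 \is monic.
Proof. by rewrite monicE lead_coef_poly // oner_neq0. Qed.

Lemma mkPhi0 : mk_monic Phi0 = Phi0.
Proof. by rewrite /mk_monic Phi0_size Phi0_monic. Qed.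

Lemma in_Phi0 : in_qpoly Phi0 Phi0 = 0.
Proof.
apply: val_inj => /=; rewrite mkPhi0.
by apply: Pdiv.CommonRing.rmodpp; apply: mulrC.
Qed.

Lemma hzR : Phi ('qX : RR) = 0.
Proof.
rewrite -in_Phi0.
have -> : in_qpoly Phi0 Phi0 = in_qpoly Phi0 (\sum_(i < 17) (1:F) *: 'X^i).
  by congr (in_qpoly _ _); exact: poly_def.
rewrite raddf_sum.
rewrite (eq_bigr (fun i : 'I_17 => ('qX : RR) ^+ i)); last first.
  move=> i _; rewrite scale1r.
  change (in_qpoly Phi0 ('X ^+ i) = (in_qpoly Phi0 'X) ^+ i).
  elim: (nat_of_ord i) => [|k IH]; first by rewrite !expr0 in_qpoly1.
  by rewrite !exprS in_qpolyM IH.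
by rewrite /Phi !big_ord_recr big_ord0 /= add0r expr0 expr1.
Qed.

Lemma cinjR : injective (qpolyC Phi0).
Proof. by move=> a b e; apply: polyC_inj; rewrite -!(qpolyCE Phi0) e. Qed.

Lemma charRR : p \in [pchar RR].
Proof. by rewrite pchar_qpoly; apply: pchar_Fp. Qed.
End Inst.


Lemma Sfin (p : nat) (hp : prime p) (hodd : odd p) (h17 : p != 17%N) :
  (legendre 2 p)%:~R *
    \sum_(0 <= k < (p %/ 4).+1) ('C(4 * k, 2 * k))%:R / (272%:R) ^+ k
  = 2 ^+ p./2 * T p :> 'F_p.
Proof.
rewrite euler2 //; congr (_ * _).
have -> : (p %/ 4 = p./2./2)%N by rewrite -!divn2 -divnMA.
rewrite big_mkord /T; apply: eq_bigr => k _.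
have hk : (k.*2 <= p./2)%N.
  have := ltn_ord k; have := odd_double_half (p./2); case: (odd _) => /=; lia.
have -> : (4 * k = (k.*2).*2)%N by rewrite -!mul2n mulnA.
rewrite mul2n binF //.
have e16 : ((-4 : 'F_p) ^+ (k.*2)) = 16%:R ^+ k.
  by rewrite -mul2n exprM sqrrN; congr (_ ^+ _); rewrite -natrX.
have e272 : (272%:R : 'F_p) = 16%:R * 17%:R by rewrite -natrM.
have n16 : (16%:R : 'F_p) ^+ k != 0.
  by rewrite expf_neq0 // (_ : 16%:R = 2 ^+ 4) ?expf_neq0 ?two_nz // -natrX.
rewrite e16 e272 exprMn invfM exprVn.
field.
by rewrite n16 andbT expf_neq0 // nz17.
Qed.

Theorem corollary2p8 (p : nat) (hp : prime p) (hodd : odd p) (h17 : p != 17%N) :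
  let S : 'F_p :=
    (legendre 2 p)%:~R *
    \sum_(0 <= k < (p %/ 4).+1) ('C(4 * k, 2 * k))%:R / (272%:R) ^+ k in
  let r := (p %% 17)%N in
  (r \in [:: 1; 16; 4; 13]%N -> S = 1) /\
  (r \in [:: 2; 15; 8; 9]%N -> S = -1) /\
  (r \in [:: 6; 11; 7; 10]%N -> S = 4^-1) /\
  (r \in [:: 3; 14; 5; 12]%N -> S = - 4^-1).
Proof.
move=> S r.
have SE : S = 2 ^+ p./2 * T p by rewrite /S Sfin.
have M := fun hr => @mainQ p hp hodd h17 _ (qpolyC (Phi0 p)) (@cinjR p) (@charRR p hp) _ (hzR p) hr.
have M9 := fun hr => @main9 p hp hodd h17 _ (qpolyC (Phi0 p)) (@cinjR p) (@charRR p hp) _ (hzR p) hr.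
have M3 := fun hr => @main3 p hp hodd h17 _ (qpolyC (Phi0 p)) (@cinjR p) (@charRR p hp) _ (hzR p) hr.
have M10 := fun hr => @main10 p hp hodd h17 _ (qpolyC (Phi0 p)) (@cinjR p) (@charRR p hp) _ (hzR p) hr.
have f2 : (2 : 'F_p) ^+ p./2 * 2 ^+ p./2 = 1.
  by rewrite -exprD addnn fermat // two_nz.
have n2 := @two_nz p hp hodd.
have key : forall (e X : 'F_p), e * e = 1 -> 17 ^+ p./2 = e ->
    2 * T p * 17 ^+ p./2 = 2 ^+ p./2 * X -> S = e * X / 2.
  move=> e X ee e17 eT.
  have h1 : 2 * S * e = X.
    rewrite SE; transitivity (2 ^+ p./2 * (2 * T p * 17 ^+ p./2)); first by rewrite e17; ring.
    by rewrite eT mulrA f2 mul1r.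
  rewrite -h1; transitivity (S * (e * e) * (2 / 2)); first by rewrite ee divff // !mulr1.
  ring.
split; [|split; [|split]].
- move=> /M [e17 eT]; rewrite (key 1 2) ?mul1r ?mulfV //.
- move=> /M9 [e17 eT]; rewrite (key 1 (-2)) ?mul1r ?mulNr ?mulfV //.
- move=> /M10 [e17 eT]; rewrite (key (-1) (- 2^-1)) ?mulN1r ?opprK ?mulrNN ?mulr1 //.
  by rewrite -invfM -natrM.
- move=> /M3 [e17 eT]; rewrite (key (-1) (2^-1)) ?mulN1r ?opprK ?mulrNN ?mulr1 //.
  by rewrite mulNr -invfM -natrM.

Qed.
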